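(* Let $(\Delta,R)$ be a gentle quiver, $R_0$ a set of isolated relations in it, and $(\Delta',R')$ the quiver obtained from $(\Delta,R)$ by completing the relations from $R_0$. If $(\Delta',R')$ is a gentle quiver, then \[ f_{(\Delta',R')} = |R_0|\cdot[0,3] + \sum_{\mathcal O\in\mathcal N/\mathbb Z\,\cup\,\mathcal C/\mathbb Z}[\,p(\mathcal O)-m(\mathcal O),\; q(\mathcal O)-2m(\mathcal O)\,], \] where the orbits are those of $(\Delta,R)$ and $m(\mathcal O):=|R_0\cap\mathcal O|$.
   Context: A quiver $\Delta$ has finite vertex set $\Delta_0$, arrow set $\Delta_1$, maps $s,t$. A path of length $n\ge1$ is $(\alpha_1,\dots,\alpha_n)$ with $s\alpha_i=t\alpha_{i+1}$. A gentle quiver is $(\Delta,R)$ with $\Delta$ connected, $R$ a set of paths of length 2, such that: (1) each vertex is start of at most two arrows and end of at most two arrows; (2) for each arrow $\alpha$ at most one $\beta$ with $s\beta=t\alpha$, $(\beta,\alpha)\notin R$ and at most one $\gamma$ with $t\gamma=s\alpha$, $(\alpha,\gamma)\notin R$; (3) for each $\alpha$ at most one $\beta$ with $(\beta,\alpha)\in R$ and at most one $\gamma$ with $(\alpha,\gamma)\in R$; (4) for some $n$ every path of length $n$ has a subpath in $R$. Fix $\sigma,\tau:\Delta_1\to\{\pm1\}$ with distinct arrows of same start having opposite $\sigma$, distinct arrows of same end opposite $\tau$, and for $s\alpha=t\beta$: $(\alpha,\beta)\in R$ iff $\sigma\alpha=\tau\beta$; $\sigma\omega=\sigma\alpha_n,\tau\omega=\tau\alpha_1$.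 Permitted paths: no consecutive pair in $R$, plus trivial $1_{x,\varepsilon}$ ($s=t=x$, $\sigma=\varepsilon,\tau=-\varepsilon$); maximal if no arrow $\alpha$ with $s\alpha=t\omega,\sigma\alpha=-\tau\omega$ and no $\beta$ with $t\beta=s\omega,\tau\beta=-\sigma\omega$; set $\mathcal M$. Antipaths: all consecutive pairs in $R$, plus trivial $1'_{x,\varepsilon}$ ($\sigma=\tau=\varepsilon$); maximal if no $\alpha$ with $s\alpha=t\omega,\sigma\alpha=\tau\omega$ and no $\beta$ with $t\beta=s\omega,\tau\beta=\sigma\omega$; set $\mathcal N$. $\phi:\mathcal M\to\mathcal N$, $\omega\mapsto$ unique $\omega'$ with $t\omega'=t\omega,\tau\omega'=-\tau\omega$; $\psi:\mathcal N\to\mathcal M$, $\omega\mapsto$ unique $\omega'$ with $s\omega'=s\omega,\sigma\omega'=-\sigma\omega$; $\Phi=\phi\psi$; orbits $\mathcal N/\mathbb Z$ with $p(\mathcal O)=|\mathcal O|$, $q(\mathcal O)=\sum_{\omega\in\mathcal O}\ell(\omega)$. $\mathcal C$: arrows $\alpha$ with $(\alpha)$ not a subpath of a maximal antipath; $\Psi:\mathcal C\to\mathcal C$, $\alpha\mapsto$ unique $\beta\in\mathcal C$ with $t\beta=s\alpha,\tau\beta=\sigma\alpha$; orbits $\mathcal C/\mathbb Z$ with $p(\mathcal O)=0$, $q(\mathcal O)=|\mathcal O|$. $f(p,q)$ is the number of orbits in $\mathcal N/\mathbb Z\cup\mathcal C/\mathbb Z$ with $(p(\mathcal O),q(\mathcal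 O))=(p,q)$; $[p,q]$ is the characteristic function of $\{(p,q)\}\subset\mathbb N^2$; sums pointwise. A relation $(\alpha,\beta)\in R$ is isolated if the path $(\alpha,\beta)$ lies in $\mathcal N$. Completing a set $R_0$ of isolated relations: add for each $\rho=(\alpha,\beta)\in R_0$ a new arrow $\gamma_\rho$ from $t\alpha$ to $s\beta$, and set $R'=R\cup\{(\gamma_\rho,\alpha),(\beta,\gamma_\rho)\mid\rho=(\alpha,\beta)\in R_0\}$, vertices unchanged. *)

(* Defs.v *)
From mathcomp Require Import all_boot.
Set Implicit Arguments. Unset Strict Implicit. Unset Printing Implicit Defensive.

(* Conventions: a quiver is (V, A, s, t) with finite types of vertices V and
   arrows A; R : {set A * A} is the set of relations, the pair (a,b) standing
   for the path (a,b) of length 2 (s a = t b).  Signs +1/-1 are encoded as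
   booleans (true = +1, negation = negb).
   A path (a_1,...,a_n) (s a_i = t a_(i+1)) is encoded as inr (a_1, [:: a_2;..;a_n]);
   a trivial path 1_{x,e} / 1'_{x,e} is encoded as inl (x, e). *)

Section Gentle.
Variables (V A : finType) (s t : A -> V) (R : {set A * A}).

Definition adjacent (x y : V) : bool :=
  [exists a : A, ((s a == x) && (t a == y)) || ((s a == y) && (t a == x))].

Definition gentle : Prop :=
  (0 < #|V| /\ (forall x y : V, connect adjacent x y)) /\
  (forall p, p \in R -> s p.1 = t p.2) /\
  (forall x : V, #|[set a : A | s a == x]| <= 2 /\ #|[set a : A | t a == x]| <= 2) /\
  (forall a : A, #|[set b : A | (s b == t a) && ((b, a) \notin R)]| <= 1 /\
                 #|[set c : A | (t c == s a) && ((a, c) \notin R)]| <= 1) /\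
  (forall a : A, #|[set b : A | (b, a) \in R]| <= 1 /\
                 #|[set c : A | (a, c) \in R]| <= 1) /\
  (exists n : nat, 0 < n /\
     forall (a : A) (r : seq A), (size r).+1 = n ->
       path (fun x y => s x == t y) a r ->
       ~~ path (fun x y => (s x == t y) && ((x, y) \notin R)) a r).

Variables (sg tau : A -> bool).

Definition sign_cond : Prop :=
  [/\ (forall a b : A, a != b -> s a = s b -> sg a != sg b),
      (forall a b : A, a != b -> t a = t b -> tau a != tau b) &
      (forall a b : A, s a = t b -> ((a, b) \in R) = (sg a == tau b))].

Definition word := ((V * bool) + (A * seq A))%type.

Definition arrows (w : word) : seq A :=
  match w with inl _ => [::] | inr (a, r) => a :: r end.
Definition wlen (w : word) : nat := size (arrows w).
Definition wt (w : word) : V := match w with inl (x, _) => x | inr (a, _) => t a end.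
Definition ws (w : word) : V :=
  match w with inl (x, _) => x | inr (a, r) => s (last a r) end.
Definition sgP (w : word) : bool :=
  match w with inl (_, e) => e | inr (a, r) => sg (last a r) end.
Definition tauP (w : word) : bool :=
  match w with inl (_, e) => ~~ e | inr (a, _) => tau a end.
Definition sgA (w : word) : bool :=
  match w with inl (_, e) => e | inr (a, r) => sg (last a r) end.
Definition tauA (w : word) : bool :=
  match w with inl (_, e) => e | inr (a, _) => tau a end.

Definition permitted (w : word) : bool :=
  match w with
  | inl _ => true
  | inr (a, r) => path (fun x y => (s x == t y) && ((x, y) \notin R)) a r
  end.
Definition antipath (w : word) : bool :=
  match w with
  | inl _ => true
  | inr (a, r) => path (fun x y => (s x == t y) && ((x, y) \in R)) a r
  end.

Definition max_permitted (w : word) : bool :=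
  [&& permitted w,
      [forall a : A, ~~ ((s a == wt w) && (sg a == ~~ tauP w))] &
      [forall b : A, ~~ ((t b == ws w) && (tau b == ~~ sgP w))]].
Definition max_antipath (w : word) : bool :=
  [&& antipath w,
      [forall a : A, ~~ ((s a == wt w) && (sg a == tauA w))] &
      [forall b : A, ~~ ((t b == ws w) && (tau b == sgA w))]].

Fixpoint seqs_upto (n : nat) : seq (seq A) :=
  match n with
  | 0 => [:: [::]]
  | n'.+1 => [::] :: [seq a :: r | a <- enum A, r <- seqs_upto n']
  end.

(* candidate words: all trivial ones and all arrow words of length <= #|A|.
   (Maximal permitted paths and maximal antipaths of a gentle quiver have
   pairwise distinct arrows, so this loses nothing.) *)
Definition cands : seq word :=
  [seq inl p | p <- enum [set: (V * bool)%type]] ++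
  [seq inr (a, r) | a <- enum A, r <- seqs_upto (#|A|).-1].

Definition Mset : seq word := [seq w <- cands | max_permitted w].
Definition Nset : seq word := [seq w <- cands | max_antipath w].

(* phi : M -> N and psi : N -> M (the unique element, picked from the list) *)
Definition phi (w : word) : word :=
  nth w [seq w' <- Nset | (wt w' == wt w) && (tauA w' == ~~ tauP w)] 0.
Definition psi (w : word) : word :=
  nth w [seq w' <- Mset | (ws w' == ws w) && (sgP w' == ~~ sgA w)] 0.
Definition Phi (w : word) : word := phi (psi w).

Definition orbN (w : word) : seq word :=
  [seq w' <- Nset | w' \in traject Phi w (size Nset)].
Definition orbitsN : seq (seq word) := undup [seq orbN w | w <- Nset].
Definition pN (O : seq word) : nat := size O.
Definition qN (O : seq word) : nat := sumn [seq wlen w | w <- O].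

Definition Cset : seq A :=
  [seq a <- enum A | ~~ has (fun w => a \in arrows w) Nset].
Definition Psi (a : A) : A :=
  nth a [seq b <- Cset | (t b == s a) && (tau b == sg a)] 0.
Definition orbC (a : A) : seq A := [seq b <- Cset | b \in traject Psi a (size Cset)].
Definition orbitsC : seq (seq A) := undup [seq orbC a | a <- Cset].
(* for O in C/Z : p(O) = 0, q(O) = |O| *)

Definition fcount (P Q : nat) : nat :=
  count (fun O => (pN O == P) && (qN O == Q)) orbitsN +
  count (fun O => (P == 0) && (size O == Q)) orbitsC.

Definition relword (r : A * A) : word := inr (r.1, [:: r.2]).
Definition isolated_set (R0 : {set A * A}) : Prop :=
  R0 \subset R /\ (forall r, r \in R0 -> relword r \in Nset).

(* m(O) = |R0 n O| for an orbit O of N/Z; for orbits of C/Z (sets of arrows)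
   the intersection with R0 (a set of length-2 paths) is empty, so m = 0 *)
Definition mN (R0 : {set A * A}) (O : seq word) : nat :=
  count (fun w => [exists r in R0, w == relword r]) O.

Definition rhs (R0 : {set A * A}) (P Q : nat) : nat :=
  (if (P == 0) && (Q == 3) then #|R0| else 0) +
  count (fun O => (pN O == P + mN R0 O) && (qN O == Q + 2 * mN R0 O)) orbitsN +
  count (fun O => (P + 0 == 0) && (size O == Q + 2 * 0)) orbitsC.

End Gentle.

Section Completion.
Variables (V A : finType) (s t : A -> V) (R R0 : {set A * A}).

Definition newarr := {r : A * A | r \in R0}.
Definition carr : finType := (A + newarr)%type.

Definition csrc (e : carr) : V :=
  match e with inl a => s a | inr r => t (val r).1 end.
Definition ctgt (e : carr) : V :=
  match e with inl a => t a | inr r => s (val r).2 end.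
Definition crel : {set carr * carr} :=
  [set p : carr * carr |
     match p with
     | (inl a, inl b) => (a, b) \in R
     | (inr r, inl a) => a == (val r).1
     | (inl b, inr r) => b == (val r).2
     | _ => false
     end].
End Completion.

Arguments csrc {V A} s t R0 e.
Arguments ctgt {V A} s t R0 e.

(* Submission.v *)
Require Import Defs.
From mathcomp Require Import all_boot.
From mathcomp Require Import zify.
Set Implicit Arguments. Unset Strict Implicit. Unset Printing Implicit Defensive.


Section Walk.
Variables (A P : finType) (J : P -> P).
Hypothesis JK : involutive J.

Fixpoint cwp (u v : A -> P) (q : P) (l : seq A) (e : P) : bool :=
  match l with [::] => q == e | c :: l' => (u c == q) && cwp u v (J (v c)) l' e end.
Definition term (u : A -> P) (q : P) := [forall c, u c != q].

Lemma termP (u : A -> P) q : reflect (forall c, u c != q) (term u q).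
Proof. exact: forallP. Qed.

Lemma cwp_catI u v q l1 m l2 e : cwp u v q l1 m -> cwp u v m l2 e -> cwp u v q (l1 ++ l2) e.
Proof.
elim: l1 q => [|c l1 IH] q /=; first by move/eqP->.
by case/andP=> -> H1 H2; rewrite (IH _ H1 H2).
Qed.

Lemma cwp_catE u v q l1 l2 e : cwp u v q (l1 ++ l2) e -> exists m, cwp u v q l1 m /\ cwp u v m l2 e.
Proof.
elim: l1 q => [|c l1 IH] q /=; first by move=> H; exists q.
case/andP=> -> /IH [m [H1 H2]]; by exists m; rewrite H1.
Qed.

Lemma cwp_rev u v q l e : cwp u v q l e -> cwp v u (J e) (rev l) (J q).
Proof.
elim: l q => [|c l IH] q /=; first by move/eqP->.
case/andP=> /eqP <- /IH H; rewrite rev_cons -cats1.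
apply: (cwp_catI H); by rewrite /= JK !eqxx.
Qed.

Lemma cwp_det u v (u_inj : injective u) q l1 e1 l2 e2 :
  cwp u v q l1 e1 -> term u e1 -> cwp u v q l2 e2 -> term u e2 -> l1 = l2 /\ e1 = e2.
Proof.
elim: l1 q l2 => [|c l1 IH] q [|c' l2] /=.
- by move=> /eqP-> _ /eqP->.
- by move=> /eqP <- /termP T /andP [/eqP H _]; have := T c'; rewrite H eqxx.
- by move=> /andP [/eqP H _] _ /eqP <- /termP T; have := T c; rewrite H eqxx.
- move=> /andP [/eqP H1 W1] T1 /andP [/eqP H2 W2] T2.
  have ec : c = c' by apply: u_inj; rewrite H1 H2.
  subst c'; by have [-> ->] := IH _ _ W1 T1 W2 T2.
Qed.

Lemma cwp_uniq u v (u_inj : injective u) (v_inj : injective v) q l e :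
  cwp u v q l e -> term v (J q) -> uniq l.
Proof.
move=> W T.
suff H : forall l0, cwp u v q (l0 ++ l) e -> uniq l by apply: (H [::]).
elim: l {W} => [|c l IH] l0 //= W.
apply/andP; split; last by apply: (IH (rcons l0 c)); rewrite cat_rcons.
apply/negP=> Hc; move: W; case/splitPr: Hc => l1 l2 W1.
have W2 : cwp u v q (l0 ++ c :: l2) e.
  have [m [Wa Wb]] := cwp_catE W1.
  apply: (cwp_catI Wa); move: Wb => /= /andP [/eqP ucm Wb].
  rewrite ucm eqxx /=.
  have [m' [Wc Wd]] := cwp_catE Wb.
  by move: Wd => /= /andP [_ We].
have R1 := cwp_rev W1; have R2 := cwp_rev W2.
have T' : term v (J q) := T.
have [E _] := cwp_det v_inj R1 T' R2 T'.
have := congr1 size E; rewrite !size_rev !size_cat /= size_cat /=.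
move=> /eqP; rewrite eqn_add2l eqSS; lia.
Qed.

Fixpoint wk (u v : A -> P) (n : nat) (q : P) : seq A :=
  if n is n'.+1 then
    (if [pick c | u c == q] is Some c then c :: wk u v n' (J (v c)) else [::])
  else [::].
Fixpoint wke (u v : A -> P) (n : nat) (q : P) : P :=
  if n is n'.+1 then
    (if [pick c | u c == q] is Some c then wke u v n' (J (v c)) else q)
  else q.

Lemma wk_cwp u v n q : cwp u v q (wk u v n q) (wke u v n q).
Proof.
elim: n q => [|n IH] q //=.
case: pickP => [c /eqP Hc|_] /=; last by [].
by rewrite Hc eqxx IH.
Qed.

Lemma wk_size u v n q : size (wk u v n q) = n \/ term u (wke u v n q).
Proof.
elim: n q => [|n IH] q /=; first by left.
case: pickP => [c /eqP Hc|H] /=.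
- by case: (IH (J (v c))) => [->|]; [left|right].
- by right; apply/forallP=> c; rewrite H.
Qed.

Lemma uniq_size_card (l : seq A) : uniq l -> size l <= #|A|.
Proof. by move=> U; rewrite cardT; apply: uniq_leq_size U _ => x; rewrite mem_enum. Qed.

Lemma cwp_exists u v (u_inj : injective u) (v_inj : injective v) q :
  term v (J q) -> exists l e, [/\ cwp u v q l e, term u e & size l <= #|A|].
Proof.
move=> T.
have W := wk_cwp u v #|A|.+1 q.
have U := cwp_uniq u_inj v_inj W T.
have S := uniq_size_card U.
case: (wk_size u v #|A|.+1 q) => [E|Te]; first by rewrite E ltnn in S.
by exists (wk u v #|A|.+1 q), (wke u v #|A|.+1 q); split.
Qed.

End Walk.


Lemma sum_partition (T S : eqType) (L : seq T) (h : T -> S) (F : T -> nat) :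
  \sum_(x <- L) F x = \sum_(O <- undup (map h L)) \sum_(x <- L | h x == O) F x.
Proof.
rewrite (eq_bigr (fun O => \sum_(x <- L) (if h x == O then F x else 0)));
  last by move=> O _; rewrite big_mkcond.
rewrite exchange_big /=; apply: eq_big_seq => x xL.
have hU : h x \in undup (map h L) by rewrite mem_undup map_f.
rewrite (bigD1_seq _ hU (undup_uniq _)) /= eqxx big1 ?addn0 //.
by move=> O /negbTE; rewrite eq_sym => ->.
Qed.

Section Orbit.
Variables (T : eqType) (L : seq T) (f : T -> T).
Hypotheses (UL : uniq L) (fL : forall x, x \in L -> f x \in L)
  (finj : {in L &, injective f}).

Lemma iter_in n x : x \in L -> iter n f x \in L.
Proof. by move=> xL; elim: n => //= n IH; apply: fL. Qed.

Lemma iter_sub i j x : x \in L -> i <= j -> iter i f x = iter j f x -> x = iter (j - i) f x.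
Proof.
elim: i j => [|i IH] j xL; first by rewrite subn0.
case: j => // j; rewrite ltnS => ij /= E.
have := finj (iter_in i xL) (iter_in j xL) E.
by rewrite subSS; apply: IH.
Qed.

Lemma period x : x \in L -> exists2 p, 0 < p <= size L & iter p f x = x.
Proof.
move=> xL.
set s := [seq iter i f x | i <- iota 0 (size L).+1].
have : ~~ uniq s.
  apply/negP=> U; have := uniq_leq_size U.
  have sub : {subset s <= L} by move=> y /mapP [i _ ->]; apply: iter_in.
  by move/(_ L sub); rewrite size_map size_iota ltnn.
case/(uniqPn x) => i [j [ij js E]].
move: js E; rewrite size_map size_iota => js.
rewrite !(nth_map 0) ?size_iota // ?(ltn_trans ij js) // !nth_iota ?(ltn_trans ij js) // !add0n => E.
exists (j - i); first by apply/andP; split; lia.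
by rewrite -(iter_sub xL (ltnW ij) E).
Qed.

Definition lreach x y := exists n, iter n f x = y.

Lemma iter_mulp p x k : iter p f x = x -> iter (k * p) f x = x.
Proof. move=> E; elim: k => //= k IH; by rewrite mulSn iterD IH E. Qed.

Lemma traject_reach x y : x \in L -> (y \in traject f x (size L)) <-> lreach x y.
Proof.
move=> xL; split.
  by case/trajectP=> i _ ->; exists i.
case=> n <-; have [p /andP [p0 pL] E] := period xL.
apply/trajectP; exists (n %% p); first by apply: leq_trans (ltn_pmod n p0) pL.
by rewrite {1}(divn_eq n p) addnC iterD iter_mulp.
Qed.

Lemma reach_sym x y : x \in L -> lreach x y -> lreach y x.
Proof.
move=> xL [n <-]; have [p /andP [p0 _] E] := period xL.
exists (n * p - n); rewrite -iterD subnK; first by rewrite iter_mulp.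
by rewrite leq_pmulr.
Qed.

Lemma reach_trans x y z : lreach x y -> lreach y z -> lreach x z.
Proof. by case=> n <- [m <-]; exists (m + n); rewrite iterD. Qed.

Lemma surj x : x \in L -> exists2 y, y \in L & f y = x.
Proof.
move=> xL; have [p /andP [p0 _] E] := period xL.
exists (iter p.-1 f x); first exact: iter_in.
by rewrite -iterS prednK.
Qed.

Definition lorb x := [seq y <- L | y \in traject f x (size L)].
Definition lorbits := undup [seq lorb x | x <- L].

Lemma mem_orb x y : x \in L -> (y \in lorb x) <-> (y \in L /\ lreach x y).
Proof.
move=> xL; rewrite mem_filter; split.
  by case/andP=> /(traject_reach y xL) ? ?.
by case=> yL /(traject_reach y xL) ->.
Qed.

Lemma orb_self x : x \in L -> x \in lorb x.
Proof. by move=> xL; apply/mem_orb => //; split=> //; exists 0. Qed.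

Lemma orb_eq x y : x \in L -> y \in lorb x -> lorb y = lorb x.
Proof.
move=> xL /(mem_orb _ xL) [yL rxy].
apply: eq_in_filter => z zL.
apply/idP/idP.
  move/(traject_reach z yL) => ryz; apply/(traject_reach z xL); exact: reach_trans rxy ryz.
move/(traject_reach z xL) => rxz; apply/(traject_reach z yL).
exact: reach_trans (reach_sym xL rxy) rxz.
Qed.

Lemma orbits_count (pr : pred (seq T)) (g : pred T) (k : nat) :
  (forall O, O \in lorbits -> pr O -> count g O = k) ->
  count pr lorbits * k = count (fun x => g x && pr (lorb x)) L.
Proof.
move=> Hk.
rewrite -!sum1_count big_distrl /=.
rewrite [RHS]big_mkcond /= (sum_partition L lorb) /=.
rewrite [LHS]big_mkcond /=.
apply: eq_big_seq => O; rewrite mem_undup => /mapP [y yL ->].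
have E : forall x, x \in L -> (lorb x == lorb y) = (x \in lorb y).
  move=> x xL; apply/eqP/idP => [<-|]; first exact: orb_self.
  by move/(orb_eq yL).
rewrite big_seq_cond.
rewrite (eq_bigr (fun x => if g x && pr (lorb y) then 1 else 0)); last first.
  by move=> x /andP [_ /eqP ->].
rewrite (eq_bigl (fun x => x \in lorb y)); last first.
  move=> x /=; case xL: (x \in L) => /=; first by rewrite E.
  by apply/esym/negbTE; rewrite mem_filter xL andbF.
rewrite -big_filter.
have -> : [seq x <- L | x \in lorb y] = lorb y.
  rewrite {2}/lorb; apply: eq_in_filter => x xL.
  by rewrite mem_filter xL andbT.
case: (boolP (pr (lorb y))) => Pr; last by rewrite big1 // => x _; rewrite andbF.
rewrite mul1n -(Hk _ _ Pr); last by rewrite mem_undup map_f.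
rewrite -sum1_count big_mkcond /=; apply: eq_bigr => x _; by rewrite andbT.
Qed.

End Orbit.

Section FirstReturn.
Variables (T T' : eqType) (L : seq T) (f : T -> T) (L' : seq T') (f' : T' -> T').
Hypotheses (UL : uniq L) (fL : forall x, x \in L -> f x \in L)
  (finj : {in L &, injective f}).
Hypotheses (UL' : uniq L') (fL' : forall x, x \in L' -> f' x \in L')
  (finj' : {in L' &, injective f'}).
Variables (lift : T -> T') (H : pred T).
Hypothesis lift_in : forall x, x \in L -> ~~ H x -> lift x \in L'.
Hypothesis lift_inj : {in L &, injective lift}.
Hypothesis FR : forall x, x \in L -> ~~ H x -> exists k, [/\ 0 < k,
  f' (lift x) = lift (iter k f x), ~~ H (iter k f x) &
  forall j, 0 < j < k -> H (iter j f x)].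

Lemma FR1 x n : x \in L -> ~~ H x ->
  exists y, [/\ iter n f' (lift x) = lift y, y \in L, ~~ H y & lreach f x y].
Proof.
move=> xL Hx; elim: n => [|n [y [E yL Hy rxy]]]; first by exists x; split=> //; exists 0.
have [k [k0 E' Hk _]] := FR yL Hy.
exists (iter k f y); split=> //; first by rewrite iterS E E'.
  exact: iter_in.
by apply: reach_trans rxy _; exists k.
Qed.

Lemma FR2 n x : x \in L -> ~~ H x -> ~~ H (iter n f x) -> lreach f' (lift x) (lift (iter n f x)).
Proof.
elim: n {-2}n (leqnn n) x => [|N IH] n nN x xL Hx Hy.
  by move: nN; rewrite leqn0 => /eqP ->; exists 0.
case: n nN Hy => [|n] nN Hy; first by exists 0.
have [k [k0 E Hk Hj]] := FR xL Hx.
have kn : k <= n.+1.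
  rewrite leqNgt; apply/negP => nk.
  by move: (Hj n.+1); rewrite nk /= => /(_ isT); rewrite (negbTE Hy).
have : iter n.+1 f x = iter (n.+1 - k) f (iter k f x) by rewrite -iterD subnK.
move=> E2; rewrite E2 in Hy *.
have := IH (n.+1 - k) _ (iter k f x) (iter_in fL k xL) Hk Hy.
case; first by move: nN; rewrite ltnS; lia.
move=> m Em; exists m.+1; by rewrite iterSr E.
Qed.

Lemma FR_orb x : x \in L -> ~~ H x ->
  perm_eq (lorb L' f' (lift x)) [seq lift y | y <- lorb L f x & ~~ H y].
Proof.
move=> xL Hx.
have lxL := lift_in xL Hx.
apply: uniq_perm.
- exact: filter_uniq.
- rewrite map_inj_in_uniq; first by apply: filter_uniq; apply: filter_uniq.
  by move=> a b; rewrite !mem_filter => /and3P [_ _ aL] /and3P [_ _ bL]; apply: lift_inj.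
move=> y'; apply/idP/idP.
- move/(mem_orb UL' fL' finj' _ lxL) => [y'L [n <-]].
  have [y [E yL Hy rxy]] := FR1 n xL Hx.
  rewrite E; apply: map_f; rewrite mem_filter Hy /=.
  by apply/(mem_orb UL fL finj _ xL).
- case/mapP => y; rewrite mem_filter => /andP [Hy /(mem_orb UL fL finj _ xL) [yL [n En]]] ->.
  apply/(mem_orb UL' fL' finj' _ lxL); split; first exact: lift_in.
  by rewrite -En; apply: FR2 => //; rewrite En.
Qed.

End FirstReturn.


Definition negp (V : finType) (p : V * bool) : V * bool := (p.1, ~~ p.2).
Definition Jb (V : finType) (b : bool) (p : V * bool) := if b then negp p else p.

Lemma negpK (V : finType) : involutive (@negp V).
Proof. by case=> x e; rewrite /negp /= negbK. Qed.
Lemma JbK (V : finType) b : involutive (@Jb V b).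
Proof. by case: b => p //=; apply: negpK. Qed.

Section Gen.
Variables (V A : finType) (s t : A -> V) (R : {set A * A}) (sg tau : A -> bool).
Hypothesis HS : sign_cond s t R sg tau.

Definition tp (a : A) : V * bool := (s a, sg a).
Definition hp (a : A) : V * bool := (t a, tau a).

Lemma tp_inj : injective tp.
Proof.
move=> a b [E1 E2]; apply/eqP/negPn/negP => ab.
by case: HS => H _ _; move: (H a b ab E1); rewrite E2 eqxx.
Qed.
Lemma hp_inj : injective hp.
Proof.
move=> a b [E1 E2]; apply/eqP/negPn/negP => ab.
by case: HS => _ H _; move: (H a b ab E1); rewrite E2 eqxx.
Qed.

Definition src (w : word V A) : V * bool := (ws s w, sgA sg w).
Definition tgt (b : bool) (w : word V A) : V * bool :=
  match w with inl p => Jb b p | inr (a, _) => hp a end.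

Definition maxJ b w :=
  [&& cwp (Jb b) hp tp (tgt b w) (arrows w) (Jb b (src w)),
      term hp (Jb b (src w)) & term tp (Jb b (tgt b w))].

Lemma cwp_path b a l e :
  cwp (Jb b) hp tp (Jb b (tp a)) l e =
  path (fun x y => hp y == Jb b (tp x)) a l && (e == Jb b (tp (last a l))).
Proof.
elim: l a => [|c l IH] a /=; first by rewrite eq_sym.
by rewrite IH andbA.
Qed.

Lemma rel_anti x y : ((s x == t y) && ((x, y) \in R)) = (hp y == Jb false (tp x)).
Proof.
case: HS => _ _ H3.
rewrite /hp /tp /= xpair_eqE [t y == _]eq_sym.
case E: (s x == t y) => //=.
by rewrite (H3 _ _ (eqP E)) eq_sym.
Qed.

Lemma rel_perm x y : ((s x == t y) && ((x, y) \notin R)) = (hp y == Jb true (tp x)).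
Proof.
case: HS => _ _ H3.
rewrite /hp /tp /negp /= xpair_eqE [t y == _]eq_sym.
case E: (s x == t y) => //=.
rewrite (H3 _ _ (eqP E)).
by case: (sg x); case: (tau y).
Qed.

Lemma term_tpE (p : V * bool) : term tp p = [forall a, ~~ ((s a == p.1) && (sg a == p.2))].
Proof. by apply: eq_forallb => a; rewrite /tp -xpair_eqE; case: p. Qed.
Lemma term_hpE (p : V * bool) : term hp p = [forall a, ~~ ((t a == p.1) && (tau a == p.2))].
Proof. by apply: eq_forallb => a; rewrite /hp -xpair_eqE; case: p. Qed.

Lemma maxJ_anti w : max_antipath s t R sg tau w = maxJ false w.
Proof.
rewrite /max_antipath /maxJ term_tpE term_hpE.
case: w => [[x e]|[a l]]; rewrite /src /= ?eqxx /=; first by rewrite andbC.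
move: (cwp_path false a l (tp (last a l))); rewrite /= eqxx andbT => ->.
congr (_ && _); first by apply: eq_path => x y; exact: rel_anti.
exact: andbC.
Qed.

Lemma maxJ_perm w : max_permitted s t R sg tau w = maxJ true w.
Proof.
rewrite /max_permitted /maxJ term_tpE term_hpE.
case: w => [[x e]|[a l]]; rewrite /src /= ?eqxx /=.
  by rewrite andbC; congr (_ && _); apply: eq_forallb => c; rewrite negbK.
move: (cwp_path true a l (negp (tp (last a l)))); rewrite /= eqxx andbT => ->.
congr (_ && _); first by apply: eq_path => x y; exact: rel_perm.
exact: andbC.
Qed.

Lemma mem_seqs_upto n r : (r \in seqs_upto A n) = (size r <= n).
Proof.
elim: n r => [|n IH] [|a r] //=.
rewrite in_cons /= ltnS -IH.
apply/allpairsP/idP => [[[x y] [_ /= yin [_ ->]]]|H] //.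
by exists (a, r); split=> //; rewrite mem_enum.
Qed.

Lemma uniq_seqs_upto n : uniq (seqs_upto A n).
Proof.
elim: n => //= n IH; apply/andP; split.
  by apply/negP => /allpairsP [[x y] [_ _ /=]].
apply: allpairs_uniq => //; first exact: enum_uniq.
by move=> [x y] [x' y'] _ _ /= [-> ->].
Qed.

Lemma mem_cands w : (w \in cands V A) = (wlen w <= #|A|).
Proof.
rewrite mem_cat; case: w => [p|[a l]] /=.
  by rewrite map_f // mem_enum in_setT.
have cA : 0 < #|A| by apply/card_gt0P; exists a.
apply/orP/idP => [[/mapP [p _] //|/allpairsP [[x y] [_ /=]]]|H].
  by rewrite mem_seqs_upto => yin [-> ->]; rewrite -(prednK cA) ltnS.
right; apply/allpairsP; exists (a, l); split=> //=; first by rewrite mem_enum.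
by rewrite mem_seqs_upto -ltnS prednK.
Qed.

Lemma uniq_cands : uniq (cands V A).
Proof.
rewrite cat_uniq; apply/and3P; split.
- rewrite map_inj_uniq; first exact: enum_uniq.
  by move=> p q [].
- apply/hasPn => w /allpairsP [[x y] [_ _ /= ->]]; by apply/negP => /mapP [p _].
- apply: allpairs_uniq; [exact: enum_uniq|exact: uniq_seqs_upto|].
  by move=> [x y] [x' y'] _ _ /= [-> ->].
Qed.

Lemma maxJ_uniq b w : maxJ b w -> uniq (arrows w).
Proof.
case/and3P => W _ T.
exact: (cwp_uniq (JbK b) hp_inj tp_inj W T).
Qed.

Lemma maxJ_len b w : maxJ b w -> wlen w <= #|A|.
Proof. by move/maxJ_uniq/uniq_size_card. Qed.

Lemma mem_Nset w : (w \in Nset s t R sg tau) = maxJ false w.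
Proof.
rewrite mem_filter maxJ_anti mem_cands.
by apply/andP/idP => [[]//|H]; split=> //; apply: maxJ_len H.
Qed.

Lemma mem_Mset w : (w \in Mset s t R sg tau) = maxJ true w.
Proof.
rewrite mem_filter maxJ_perm mem_cands.
by apply/andP/idP => [[]//|H]; split=> //; apply: maxJ_len H.
Qed.

Lemma uniq_Nset : uniq (Nset s t R sg tau).
Proof. exact/filter_uniq/uniq_cands. Qed.
Lemma uniq_Mset : uniq (Mset s t R sg tau).
Proof. exact/filter_uniq/uniq_cands. Qed.

Lemma word_eq (w1 w2 : word V A) : arrows w1 = arrows w2 -> src w1 = src w2 -> w1 = w2.
Proof.
case: w1 => [p1|[a1 l1]]; case: w2 => [p2|[a2 l2]] //=.
- by move=> _ [E1 E2]; case: p1 p2 E1 E2 => [x1 e1] [x2 e2] /= -> ->.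
- by case=> -> ->.
Qed.

Lemma tgt_unique b w1 w2 : maxJ b w1 -> maxJ b w2 -> tgt b w1 = tgt b w2 -> w1 = w2.
Proof.
case/and3P => W1 T1 _ /and3P [W2 T2 _] E.
rewrite E in W1.
have [E1 E2] := cwp_det hp_inj W1 T1 W2 T2.
by apply: word_eq => //; apply: (can_inj (JbK b)).
Qed.

Lemma maxJ_rev b w : maxJ b w ->
  cwp (Jb b) tp hp (src w) (rev (arrows w)) (Jb b (tgt b w)).
Proof.
case/and3P => W _ _; have := cwp_rev (JbK b) W; by rewrite JbK.
Qed.

Lemma src_unique b w1 w2 : maxJ b w1 -> maxJ b w2 -> src w1 = src w2 -> w1 = w2.
Proof.
move=> M1 M2 E.
have R1 := maxJ_rev M1; have R2 := maxJ_rev M2.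
case/and3P: M1 => _ _ T1; case/and3P: M2 => _ _ T2.
rewrite E in R1.
have [E1 _] := cwp_det tp_inj R1 T1 R2 T2.
by apply: word_eq => //; rewrite -(revK (arrows w1)) E1 revK.
Qed.

Lemma src_inl p : src (inl p) = p.
Proof. by case: p. Qed.

Lemma mkword b q l e : cwp (Jb b) hp tp q l e -> term hp e -> term tp (Jb b q) ->
  exists w, [/\ maxJ b w, tgt b w = q, Jb b (src w) = e & arrows w = l].
Proof.
case: l => [|a l] /=.
  move=> /eqP <- Te Tq; exists (inl (Jb b q)); rewrite /maxJ /= src_inl !JbK eqxx Te Tq.
  by split.
case/andP => /eqP Ha W Te Tq.
move: (W); rewrite cwp_path => /andP [P /eqP Ee].
exists (inr (a, l)); split=> //.
rewrite /maxJ /= Ha eqxx /=.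
by rewrite -[src (inr (a, l))]/(tp (last a l)) -Ee W Te Tq.
Qed.

Lemma exists_tgt b q : term tp (Jb b q) -> exists w, maxJ b w /\ tgt b w = q.
Proof.
move=> Tq.
have [l [e [W Te _]]] := cwp_exists (JbK b) hp_inj tp_inj Tq.
have [w [M E _ _]] := mkword W Te Tq; by exists w.
Qed.

Lemma exists_src b p : term hp (Jb b p) -> exists w, maxJ b w /\ src w = p.
Proof.
move=> Tp.
have [l [e [W Te _]]] := cwp_exists (JbK b) tp_inj hp_inj Tp.
have W' := cwp_rev (JbK b) W.
have Te' : term tp (Jb b (Jb b e)) by rewrite JbK.
have [w [M _ E _]] := mkword W' Tp Te'.
by exists w; split=> //; apply: (can_inj (JbK b)).
Qed.

Lemma nth_filter_unique (T : eqType) (P : pred T) (s0 : seq T) x d :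
  x \in s0 -> P x -> (forall y, y \in s0 -> P y -> y = x) -> nth d (filter P s0) 0 = x.
Proof.
move=> xs Px U.
have : nth d (filter P s0) 0 \in filter P s0.
  by apply: mem_nth; rewrite size_filter -has_count; apply/hasP; exists x.
by rewrite mem_filter => /andP [P1 I1]; apply: U.
Qed.

Lemma tgtA_eq w : (wt t w, tauA tau w) = tgt false w.
Proof. by case: w => [[x e]|[a l]]. Qed.
Lemma tgtP_eq w : (wt t w, tauP tau w) = tgt true w.
Proof. by case: w => [[x e]|[a l]]. Qed.

Lemma phi_cond w0 w : ((wt t w0 == wt t w) && (tauA tau w0 == ~~ tauP tau w)) =
  (tgt false w0 == negp (tgt true w)).
Proof. by rewrite -tgtA_eq -tgtP_eq xpair_eqE. Qed.

Lemma psi_cond w0 w : ((ws s w0 == ws s w) && (sgP sg w0 == ~~ sgA sg w)) =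
  (src w0 == negp (src w)).
Proof. by rewrite /src /negp xpair_eqE /=; case: w0 => [[]|[]]. Qed.

Lemma phi_spec w : w \in Mset s t R sg tau ->
  phi s t R sg tau w \in Nset s t R sg tau /\ tgt false (phi s t R sg tau w) = negp (tgt true w).
Proof.
rewrite mem_Mset => M.
have T : term tp (Jb false (negp (tgt true w))) by case/and3P: M.
have [w0 [M0 E0]] := exists_tgt T.
suff -> : phi s t R sg tau w = w0 by rewrite mem_Nset.
apply: nth_filter_unique; first by rewrite mem_Nset.
  by rewrite phi_cond E0.
move=> y; rewrite mem_Nset => My.
rewrite phi_cond => /eqP Ey.
by apply: (tgt_unique My M0); rewrite Ey E0.
Qed.

Lemma psi_spec w : w \in Nset s t R sg tau ->
  psi s t R sg tau w \in Mset s t R sg tau /\ src (psi s t R sg tau w) = negp (src w).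
Proof.
rewrite mem_Nset => M.
have T : term hp (Jb true (negp (src w))) by case/and3P: M => _ T _; rewrite /= negpK.
have [w0 [M0 E0]] := exists_src T.
suff -> : psi s t R sg tau w = w0 by rewrite mem_Mset.
apply: nth_filter_unique; first by rewrite mem_Mset.
  by rewrite psi_cond E0.
move=> y; rewrite mem_Mset => My.
rewrite psi_cond => /eqP Ey.
by apply: (src_unique My M0); rewrite Ey E0.
Qed.

Lemma Phi_spec w : w \in Nset s t R sg tau ->
  [/\ Phi s t R sg tau w \in Nset s t R sg tau,
      exists l, cwp (Jb true) hp tp (negp (tgt false (Phi s t R sg tau w))) l (src w)
    & term hp (src w)].
Proof.
move=> wN.
have [mM Em] := psi_spec wN.
have [pN Ep] := phi_spec mM.
split=> //.
  exists (arrows (psi s t R sg tau w)).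
  rewrite /Phi Ep negpK.
  move: mM; rewrite mem_Mset => /and3P [W _ _].
  by rewrite /= Em negpK in W.
by move: wN; rewrite mem_Nset => /and3P [_ T _].
Qed.

Lemma Phi_inj : {in Nset s t R sg tau &, injective (Phi s t R sg tau)}.
Proof.
move=> w1 w2 N1 N2 E.
have [_ [l1 W1] T1] := Phi_spec N1.
have [_ [l2 W2] T2] := Phi_spec N2.
rewrite E in W1.
have [_ Es] := cwp_det hp_inj W1 T1 W2 T2.
by apply: (src_unique (b := false)); rewrite -?mem_Nset.
Qed.

Lemma arrow_split b w a : maxJ b w -> a \in arrows w ->
  exists l1 l2, arrows w = l1 ++ a :: l2 /\ 
    cwp (Jb b) hp tp (tgt b w) l1 (hp a) /\ cwp (Jb b) hp tp (hp a) (a :: l2) (Jb b (src w)).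
Proof.
case/and3P => W _ _ Ha; move: W; case/splitPr: Ha => l1 l2 W.
exists l1, l2; split=> //.
have [m [W1 W2]] := cwp_catE W.
by move: W2 => /= /andP [/eqP Ha W2]; split; [rewrite Ha|rewrite /= eqxx].
Qed.

Lemma arrow_unique w1 w2 a : w1 \in Nset s t R sg tau -> w2 \in Nset s t R sg tau ->
  a \in arrows w1 -> a \in arrows w2 -> w1 = w2.
Proof.
rewrite !mem_Nset => M1 M2 A1 A2.
have [l1 [l2 [_ [_ W1]]]] := arrow_split M1 A1.
have [l3 [l4 [_ [_ W2]]]] := arrow_split M2 A2.
have T1 : term hp (Jb false (src w1)) by case/and3P: M1.
have T2 : term hp (Jb false (src w2)) by case/and3P: M2.
have [_ E] := cwp_det hp_inj W1 T1 W2 T2.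
exact: src_unique M1 M2 E.
Qed.

Lemma mem_Cset a : (a \in Cset s t R sg tau) = ~~ has (fun w => a \in arrows w) (Nset s t R sg tau).
Proof. by rewrite mem_filter mem_enum andbT. Qed.

Lemma uniq_Cset : uniq (Cset s t R sg tau).
Proof. exact/filter_uniq/enum_uniq. Qed.

Lemma cwp1 J u v q c e : @cwp A (V * bool)%type J u v q [:: c] e = (u c == q) && (J (v c) == e).
Proof. by []. Qed.

Lemma Cset_in_pred a : a \in Cset s t R sg tau -> exists2 b, b \in Cset s t R sg tau & hp b = tp a.
Proof.
rewrite mem_Cset => /hasPn Ca.
case: (pickP (fun b => hp b == tp a)) => [b /eqP Hb|Hn].
  exists b => //; rewrite mem_Cset; apply/hasPn => w wN; apply/negP => bw.
  move: (wN); rewrite mem_Nset => M.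
  have [l1 [l2 [Ew [W1 _]]]] := arrow_split M bw.
  move: Ew W1; case/lastP: l1 => [|l1 c] Ew.
    move=> /= /eqP Et; case/and3P: M => _ _ /termP /(_ a).
    by rewrite /= Et Hb eqxx.
  rewrite -cats1 => /cwp_catE [m [_]]; rewrite cwp1 => /andP [_ /eqP Em].
  have ca : c = a by apply: tp_inj; rewrite -Hb -Em.
  have := Ca w wN; rewrite Ew ca mem_cat mem_rcons mem_head.
  by [].
have T : term hp (Jb false (tp a)) by apply/forallP => c; rewrite Hn.
have [w [M Ew]] := exists_src T.
have wN : w \in Nset s t R sg tau by rewrite mem_Nset.
have := Ca w wN; case: w M Ew {wN} => [p|[a0 l]] M Ew.
  case/and3P: M => _ _ /termP /(_ a); rewrite /= src_inl in Ew.
  by rewrite Ew eqxx.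
move=> /negP; elim; rewrite /= in Ew.
have -> : a = last a0 l by apply: tp_inj; rewrite -Ew.
by rewrite mem_last.
Qed.

Lemma Psi_spec a : a \in Cset s t R sg tau ->
  Psi s t R sg tau a \in Cset s t R sg tau /\ hp (Psi s t R sg tau a) = tp a.
Proof.
move=> aC; have [b bC Hb] := Cset_in_pred aC.
suff -> : Psi s t R sg tau a = b by [].
rewrite /Psi; apply: nth_filter_unique => //.
  by rewrite -xpair_eqE -[(t b, _)]/(hp b) -[(s a, _)]/(tp a) Hb.
move=> y _; rewrite -xpair_eqE -[(t y, tau y)]/(hp y) -[(s a, _)]/(tp a) -Hb => /eqP; exact: hp_inj.
Qed.

Lemma Psi_inj : {in Cset s t R sg tau &, injective (Psi s t R sg tau)}.
Proof.
move=> a b aC bC E; have [_ Ha] := Psi_spec aC; have [_ Hb] := Psi_spec bC.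
by apply: tp_inj; rewrite -Ha -Hb E.
Qed.

End Gen.


Lemma lorbits_mem (T : eqType) (L : seq T) (f : T -> T) O :
  O \in lorbits L f -> exists2 x, x \in L & O = lorb L f x.
Proof. by rewrite mem_undup => /mapP [x xL ->]; exists x. Qed.

Lemma lorbits_size (T : eqType) (L : seq T) (f : T -> T) O :
  uniq L -> (forall x, x \in L -> f x \in L) -> {in L &, injective f} ->
  O \in lorbits L f -> 0 < size O.
Proof.
move=> U fL fI /lorbits_mem [x xL ->].
by case: (lorb L f x) (orb_self U fL fI xL).
Qed.

Section Comp.
Variables (V A : finType) (s t : A -> V) (R R0 : {set A * A}) (sg tau : A -> bool)
  (sg' tau' : carr R0 -> bool).
Hypotheses (HS : sign_cond s t R sg tau) (iso : isolated_set s t R sg tau R0)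
  (HS' : sign_cond (csrc s t R0) (ctgt s t R0) (crel R R0) sg' tau').

Local Notation s' := (csrc s t R0).
Local Notation t' := (ctgt s t R0).
Local Notation R' := (crel R R0).
Local Notation tp' := (tp s' sg').
Local Notation hp' := (hp t' tau').
Local Notation tp := (tp s sg).
Local Notation hp := (hp t tau).

Definition fl (x : V) : bool :=
  if [pick a | s a == x] is Some a then sg a (+) sg' (inl a)
  else if [pick b | t b == x] is Some b then tau b (+) tau' (inl b) else false.

Lemma crel_inl a b : ((inl a, inl b) \in R') = ((a, b) \in R).
Proof. by rewrite inE. Qed.

Lemma sg'_inl a : sg' (inl a) = sg a (+) fl (s a).
Proof.
rewrite /fl; case: pickP => [a0 /eqP E|H]; last by have := H a; rewrite eqxx.
case: (eqVneq a0 a) => [->|ne]; first by case: (sg a); case: (sg' (inl a)).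
case: HS => H1 _ _; case: HS' => H1' _ _.
have ne' : (inl a0 : carr R0) != inl a by apply/eqP => -[] /eqP; rewrite (negbTE ne).
move: (H1 _ _ ne E) (H1' _ _ ne' E).
by case: (sg a); case: (sg a0); case: (sg' (inl a)); case: (sg' (inl a0)).
Qed.

Lemma tau'_inl b : tau' (inl b) = tau b (+) fl (t b).
Proof.
rewrite /fl; case: pickP => [a0 /eqP E|H].
  case: HS => _ _ H3; case: HS' => _ _ H3'.
  move: (H3 _ _ E) (H3' (inl a0) (inl b) E); rewrite crel_inl => ->.
  by case: (sg a0); case: (tau b); case: (sg' (inl a0)); case: (tau' (inl b)).
case: pickP => [b0 /eqP E|H']; last by have := H' b; rewrite eqxx.
case: (eqVneq b0 b) => [->|ne]; first by case: (tau b); case: (tau' (inl b)).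
case: HS => _ H2 _; case: HS' => _ H2' _.
have ne' : (inl b0 : carr R0) != inl b by apply/eqP => -[] /eqP; rewrite (negbTE ne).
move: (H2 _ _ ne E) (H2' _ _ ne' E).
by case: (tau b); case: (tau b0); case: (tau' (inl b)); case: (tau' (inl b0)).
Qed.

Definition rl (p : V * bool) : V * bool := (p.1, p.2 (+) fl p.1).

Lemma rlK : involutive rl.
Proof. by case=> x e; rewrite /rl /= -addbA addbb addbF. Qed.
Lemma rl_inj : injective rl.
Proof. exact: can_inj rlK. Qed.
Lemma rl_negp p : rl (negp p) = negp (rl p).
Proof. by case: p => x e; rewrite /rl /negp /=; case: e; case: (fl x). Qed.
Lemma rl_Jb b p : rl (Jb b p) = Jb b (rl p).
Proof. by case: b => //=; apply: rl_negp. Qed.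

Lemma tp'_inl a : tp' (inl a) = rl (tp a).
Proof. by rewrite /Submission.tp /rl /= sg'_inl. Qed.
Lemma hp'_inl a : hp' (inl a) = rl (hp a).
Proof. by rewrite /Submission.hp /rl /= tau'_inl. Qed.

Lemma rel_hp_tp (x y : carr R0) : s' x = t' y -> (x, y) \in R' -> hp' y = tp' x.
Proof.
move=> E M; have := rel_anti HS' x y; rewrite E eqxx M /= => /esym /eqP.
by [].
Qed.

Lemma tp'_inr (r : newarr R0) : tp' (inr r) = rl (hp (val r).1).
Proof.
rewrite -hp'_inl; apply: esym; apply: rel_hp_tp => //.
by rewrite inE eqxx.
Qed.

Lemma hp'_inr (r : newarr R0) : hp' (inr r) = rl (tp (val r).2).
Proof.
rewrite -tp'_inl; apply: rel_hp_tp => //.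
by rewrite inE eqxx.
Qed.

Lemma iso_N r : r \in R0 -> maxJ s t sg tau false (relword V r).
Proof. by case: iso => _ H /H; rewrite mem_Nset. Qed.

Lemma iso_chain r : r \in R0 -> hp r.2 = tp r.1.
Proof. by move/iso_N => /and3P [/= /andP [_ /andP [/eqP -> _]] _ _]. Qed.
Lemma iso_tgt r : r \in R0 -> term tp (hp r.1).
Proof. by move/iso_N => /and3P [_ _ T]. Qed.
Lemma iso_src r : r \in R0 -> term hp (tp r.2).
Proof. by move/iso_N => /and3P [_ T _]. Qed.

Lemma src_relword r : src s sg (relword V r) = tp r.2.
Proof. by []. Qed.
Lemma tgt_relword r : tgt t tau false (relword V r) = hp r.1.
Proof. by []. Qed.

Lemma rel_src w r : w \in Nset s t R sg tau -> r \in R0 -> src s sg w = tp r.2 -> w = relword V r.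
Proof.
rewrite mem_Nset // => M rR E.
by apply: (src_unique HS M (iso_N rR)); rewrite E.
Qed.
Lemma rel_tgt w r : w \in Nset s t R sg tau -> r \in R0 -> tgt t tau false w = hp r.1 -> w = relword V r.
Proof.
rewrite mem_Nset // => M rR E.
by apply: (tgt_unique HS M (iso_N rR)); rewrite E.
Qed.

Definition Hw (w : word V A) := [exists r in R0, w == relword V r].

Lemma HwP w : reflect (exists2 r, r \in R0 & w = relword V r) (Hw w).
Proof.
apply: (iffP existsP) => [[r /andP [rR /eqP ->]]|[r rR ->]]; first by exists r.
by exists r; rewrite rR eqxx.
Qed.

Definition lift (w : word V A) : word V (carr R0) :=
  match w with inl p => inl (rl p) | inr (a, l) => inr (inl a, map inl l) end.

Lemma src_lift w : src s' sg' (lift w) = rl (src s sg w).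
Proof.
case: w => [[x e]|[a l]] //.
change (tp' (last (inl a) (map inl l)) = rl (tp (last a l))).
by rewrite last_map tp'_inl.
Qed.
Lemma tgt_lift b w : tgt t' tau' b (lift w) = rl (tgt t tau b w).
Proof. by case: w => [p|[a l]] /=; [rewrite rl_Jb|rewrite hp'_inl]. Qed.
Lemma arrows_lift w : arrows (lift w) = map inl (arrows w).
Proof. by case: w => [p|[a l]]. Qed.
Lemma wlen_lift w : wlen (lift w) = wlen w.
Proof. by rewrite /wlen arrows_lift size_map. Qed.

Lemma lift_inj : injective lift.
Proof.
have inlI : injective (fun a : A => (inl a : carr R0)) by move=> x y [].
case=> [p|[a l]] [p'|[a' l']] //=.
- move=> E; congr inl; apply: rl_inj.
  exact: (congr1 (fun w : word V (carr R0) => if w is inl p then p else rl p) E).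
- by case=> -> E; rewrite (inj_map inlI E).
Qed.

Lemma cwp_lift b q l e : cwp (Jb b) hp' tp' (rl q) (map inl l) (rl e) = cwp (Jb b) hp tp q l e.
Proof.
elim: l q => [|c l IH] q /=; first by rewrite (inj_eq rl_inj).
by rewrite hp'_inl (inj_eq rl_inj) tp'_inl -rl_Jb IH.
Qed.

Lemma term_hp'_rl e : term hp' (rl e) = term hp e && [forall r : newarr R0, tp (val r).2 != e].
Proof.
apply/forallP/andP => [H|[/forallP H1 /forallP H2] [a|r]].
- split; apply/forallP.
    by move=> a; have := H (inl a); rewrite hp'_inl (inj_eq rl_inj).
  by move=> r; have := H (inr r); rewrite hp'_inr (inj_eq rl_inj).
- by rewrite hp'_inl (inj_eq rl_inj).
- by rewrite hp'_inr (inj_eq rl_inj).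
Qed.

Lemma term_tp'_rl q : term tp' (rl q) = term tp q && [forall r : newarr R0, hp (val r).1 != q].
Proof.
apply/forallP/andP => [H|[/forallP H1 /forallP H2] [a|r]].
- split; apply/forallP.
    by move=> a; have := H (inl a); rewrite tp'_inl (inj_eq rl_inj).
  by move=> r; have := H (inr r); rewrite tp'_inr (inj_eq rl_inj).
- by rewrite tp'_inl (inj_eq rl_inj).
- by rewrite tp'_inr (inj_eq rl_inj).
Qed.

Lemma maxJ_lift b w : maxJ s' t' sg' tau' b (lift w) =
  [&& maxJ s t sg tau b w, [forall r : newarr R0, tp (val r).2 != Jb b (src s sg w)]
    & [forall r : newarr R0, hp (val r).1 != Jb b (tgt t tau b w)]].
Proof.
rewrite /maxJ src_lift tgt_lift arrows_lift -!rl_Jb cwp_lift term_hp'_rl term_tp'_rl.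
by case: (cwp _ _ _ _ _ _); case: (term _ _); case: (term _ _); case: [forall r, _]; case: [forall r, _].
Qed.

Lemma lift_N w : w \in Nset s t R sg tau -> ~~ Hw w -> lift w \in Nset s' t' R' sg' tau'.
Proof.
move=> wN Hn; rewrite mem_Nset // maxJ_lift.
move: (wN); rewrite mem_Nset // => -> /=.
apply/andP; split; apply/forallP => r; apply/negP => /eqP E; case/negP: Hn; apply/HwP;
  exists (val r); try exact: valP.
- by apply: rel_src wN (valP r) _; rewrite E.
- by apply: rel_tgt wN (valP r) _; rewrite E.
Qed.

Lemma cwp_cons J u v q (c : carr R0) l e :
  @cwp (carr R0) (V * bool)%type J u v q (c :: l) e = (u c == q) && cwp J u v (J (v c)) l e.
Proof. by []. Qed.

Lemma tri1 (r : newarr R0) : tp' (inr r) = hp' (inl (val r).1).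
Proof. by rewrite tp'_inr hp'_inl. Qed.
Lemma tri2 (r : newarr R0) : tp' (inl (val r).1) = hp' (inl (val r).2).
Proof. by rewrite tp'_inl hp'_inl iso_chain //; exact: valP. Qed.
Lemma tri3 (r : newarr R0) : tp' (inl (val r).2) = hp' (inr r).
Proof. by rewrite tp'_inl hp'_inr. Qed.

Lemma no_cycle (r : newarr R0) l e :
  cwp (Jb false) hp' tp' (hp' (inr r)) l e -> term hp' e -> False.
Proof.
move=> W T.
have W' : cwp (Jb false) hp' tp' (hp' (inr r)) [:: inr r, inl (val r).1, inl (val r).2 & l] e.
  rewrite !cwp_cons /= tri1 tri2 tri3 !eqxx /=; exact: W.
have [E _] := cwp_det (hp_inj HS') W T W' T.
by have := congr1 size E => /= /eqP; rewrite -addn3 -{1}(addn0 (size l)) eqn_add2l.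
Qed.

Lemma noinr w r : w \in Nset s' t' R' sg' tau' -> inr r \notin arrows w.
Proof.
rewrite mem_Nset // => M; apply/negP => In.
have [l1 [l2 [_ [_ W]]]] := arrow_split M In.
case/and3P: M => _ T _; exact: no_cycle W T.
Qed.

Definition unl (c : carr R0) : A := match c with inl a => a | inr r => (val r).1 end.

Lemma map_unl (l : seq (carr R0)) : (forall r, inr r \notin l) -> map inl (map unl l) = l.
Proof.
elim: l => //= c l IH H; rewrite IH; last by move=> r; have := H r; rewrite in_cons negb_or => /andP [].
by case: c H => // r /(_ r); rewrite mem_head.
Qed.

Lemma unlift_N w' : w' \in Nset s' t' R' sg' tau' ->
  exists w, [/\ w \in Nset s t R sg tau, ~~ Hw w & w' = lift w].
Proof.
move=> N'.
have Ew : exists w, w' = lift w.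
  case: w' N' => [p|[c l]] N'; first by exists (inl (rl p)); rewrite /= rlK.
  have H : forall r, inr r \notin (c :: l) := fun r => noinr r N'.
  have Hl : forall r, inr r \notin l by move=> r; have := H r; rewrite in_cons negb_or => /andP [].
  clear N'; case: c H => [a|r] H; last by have := H r; rewrite mem_head.
  by exists (inr (a, map unl l)); rewrite /= map_unl.
case: Ew => w Ew; exists w; rewrite Ew in N'.
move: N'; rewrite mem_Nset // maxJ_lift => /and3P [M /forallP H1 _].
split=> //; first by rewrite mem_Nset.
apply/negP => /HwP [r rR Er].
by have := H1 (exist _ r rR); rewrite /= Er eqxx.
Qed.

Local Notation NN := (Nset s t R sg tau).
Local Notation PP := (Phi s t R sg tau).
Local Notation NN' := (Nset s' t' R' sg' tau').
Local Notation PP' := (Phi s' t' R' sg' tau').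

Lemma PP_in w : w \in NN -> PP w \in NN.
Proof. by move=> /(Phi_spec HS) []. Qed.
Lemma PP'_in w : w \in NN' -> PP' w \in NN'.
Proof. by move=> /(Phi_spec HS') []. Qed.

Lemma step_H y : y \in NN -> Hw y ->
  exists l, 0 < size l /\ cwp (Jb true) hp' tp' (rl (negp (tgt t tau false (PP y)))) l (rl (negp (tgt t tau false y))).
Proof.
move=> yN /HwP [r rR Ey].
have [_ [l W] _] := Phi_spec HS yN.
exists (map inl l ++ [:: inr (exist _ r rR)]); split; first by rewrite size_cat addn1.
apply: (cwp_catI (m := rl (src s sg y))); first by rewrite cwp_lift.
rewrite cwp1 hp'_inr Ey /= eqxx /=.
by rewrite tp'_inr /= -rl_negp.
Qed.

Lemma FRwalk x k : x \in NN -> ~~ Hw x -> 0 < k ->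
  (forall j, 0 < j < k -> Hw (iter j PP x)) ->
  exists l, cwp (Jb true) hp' tp' (rl (negp (tgt t tau false (iter k PP x)))) l (rl (src s sg x)).
Proof.
move=> xN Hx; elim: k => // k IH _ Hj.
case: k IH Hj => [|k] IH Hj.
  have [_ [l W] _] := Phi_spec HS xN.
  by exists (map inl l); rewrite cwp_lift.
have [l1 W1] := IH isT (fun j (H : 0 < j < k.+1) => Hj j (ltac:(case/andP: H => H1 H2; rewrite H1 /=; exact: ltnW))).
have yN : iter k.+1 PP x \in NN by apply: (iter_in PP_in).
have [l2 [_ W2]] := step_H yN (Hj k.+1 (ltac:(by rewrite /= ltnSn))).
exists (l2 ++ l1); exact: cwp_catI W2 W1.
Qed.

Lemma PP'_lift x k : x \in NN -> ~~ Hw x -> 0 < k ->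
  (forall j, 0 < j < k -> Hw (iter j PP x)) -> ~~ Hw (iter k PP x) ->
  PP' (lift x) = lift (iter k PP x).
Proof.
move=> xN Hx k0 Hj Hk.
have vN : iter k PP x \in NN by apply: (iter_in PP_in).
have lvN := lift_N vN Hk.
have lxN := lift_N xN Hx.
have [w wN Ew] := surj (uniq_Nset s' t' R' sg' tau') PP'_in (Phi_inj HS') lvN.
have [_ [l W] T] := Phi_spec HS' wN.
rewrite Ew tgt_lift -rl_negp in W.
have [l' W'] := FRwalk xN Hx k0 Hj.
have T' : term hp' (rl (src s sg x)).
  by move: lxN; rewrite mem_Nset // => /and3P [_ T' _]; rewrite src_lift in T'.
have [_ Es] := cwp_det (hp_inj HS') W T W' T'.
have -> : lift x = w.
  apply: (src_unique HS' (b := false)); try by rewrite -(mem_Nset HS').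
  by rewrite src_lift Es.
by [].
Qed.

Lemma FR_Phi x : x \in NN -> ~~ Hw x -> exists k, [/\ 0 < k,
  PP' (lift x) = lift (iter k PP x), ~~ Hw (iter k PP x) &
  forall j, 0 < j < k -> Hw (iter j PP x)].
Proof.
move=> xN Hx.
have [p /andP [p0 _] Ep] := period (uniq_Nset s t R sg tau) PP_in (Phi_inj HS) xN.
have ex : exists k, (0 < k) && ~~ Hw (iter k PP x) by exists p; rewrite p0 Ep Hx.
case: (ex_minnP ex) => k /andP [k0 Hk] Hmin.
have Hj : forall j, 0 < j < k -> Hw (iter j PP x).
  move=> j /andP [j0 jk]; case: (boolP (Hw (iter j PP x))) => // Hn.
  by have := Hmin j; rewrite j0 Hn => /(_ isT); rewrite leqNgt jk.
exists k; split=> //; exact: PP'_lift.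
Qed.

Lemma no_H_orbit x : gentle s' t' R' -> x \in NN -> (forall j, Hw (iter j PP x)) -> False.
Proof.
move=> G xN Hall.
pose D j := rl (negp (tgt t tau false (iter j PP x))).
have Wn : forall n, exists L, n <= size L /\ cwp (Jb true) hp' tp' (D n) L (D 0).
  elim=> [|n [L [SL WL]]]; first by exists [::]; rewrite /= eqxx.
  have yN : iter n PP x \in NN by apply: (iter_in PP_in).
  have [l [ne W]] := step_H yN (Hall n).
  exists (l ++ L); split; last by exact: cwp_catI W WL.
  by rewrite size_cat; case: l ne {W} => // c l' _; rewrite /= addSn ltnS; apply: leq_trans SL (leq_addl _ _).
case: G => _ [_ [_ [_ [_ [n [n0 Hn]]]]]].
have [[|c L] [SL WL]] := Wn n; first by move: SL; rewrite leqn0 => /eqP E; rewrite E in n0.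
move: WL; rewrite cwp_cons => /andP [_]; rewrite cwp_path => /andP [P _].
have P' : path (fun x y => (s' x == t' y) && ((x, y) \notin R')) c L.
  by apply: sub_path P => a b; rewrite (rel_perm HS').
have P2 := take_path n.-1 P'.
have Sr : (size (take n.-1 L)).+1 = n.
  rewrite size_take; move: SL => /= SL.
  case: ltnP => H; first by rewrite prednK.
  by apply/eqP; rewrite eqn_leq SL -(prednK n0) ltnS H.
have Hc : path (fun a b => s' a == t' b) c (take n.-1 L) by apply: sub_path P2 => a b /andP [].
by move: (Hn c (take n.-1 L) Sr Hc); rewrite P2.
Qed.

Local Notation CC := (Cset s t R sg tau).
Local Notation PS := (Psi s t R sg tau).
Local Notation CC' := (Cset s' t' R' sg' tau').
Local Notation PS' := (Psi s' t' R' sg' tau').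

Lemma inlI : injective (fun a : A => (inl a : carr R0)).
Proof. by move=> x y []. Qed.

Lemma inl_C a : a \in CC -> inl a \in CC'.
Proof.
rewrite !mem_Cset => /hasPn Ha; apply/hasPn => w' w'N.
have [w [wN _ ->]] := unlift_N w'N.
by rewrite arrows_lift (mem_map inlI); apply: Ha.
Qed.

Lemma tri_C1 (r : newarr R0) : inl (val r).1 \in CC'.
Proof.
rewrite mem_Cset; apply/hasPn => w' w'N.
have [w [wN Hn ->]] := unlift_N w'N.
rewrite arrows_lift (mem_map inlI); apply/negP => In.
have rN : relword V (val r) \in NN by case: iso => _; apply; exact: valP.
have E := arrow_unique HS wN rN In (mem_head _ _).
by case/negP: Hn; apply/HwP; exists (val r) => //; exact: valP.
Qed.

Lemma tri_C2 (r : newarr R0) : inl (val r).2 \in CC'.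
Proof.
rewrite mem_Cset; apply/hasPn => w' w'N.
have [w [wN Hn ->]] := unlift_N w'N.
rewrite arrows_lift (mem_map inlI); apply/negP => In.
have rN : relword V (val r) \in NN by case: iso => _; apply; exact: valP.
have E := arrow_unique HS wN rN In (ltac:(by rewrite /= !inE eqxx orbT)).
by case/negP: Hn; apply/HwP; exists (val r) => //; exact: valP.
Qed.

Lemma tri_C3 (r : newarr R0) : inr r \in CC'.
Proof. by rewrite mem_Cset; apply/hasPn => w' w'N; apply: noinr. Qed.

Definition AB (a : A) := [exists r : newarr R0, (a == (val r).1) || (a == (val r).2)].

Lemma inl_C_inv a : inl a \in CC' -> (a \in CC) || AB a.
Proof.
move=> aC; apply/norP => -[nC nAB].
move: nC; rewrite mem_Cset negbK => /hasP [w wN aw].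
case: (boolP (Hw w)) => Hw'.
  case/HwP: Hw' => r rR Ew; case/negP: nAB; apply/existsP; exists (exist _ r rR).
  by move: aw; rewrite Ew /= !inE.
have := lift_N wN Hw'; move: aC; rewrite mem_Cset => /hasPn H /H.
by rewrite arrows_lift (mem_map inlI) aw.
Qed.

Lemma C_notAB a : a \in CC -> ~~ AB a.
Proof.
move=> aC; apply/existsP => -[r H].
have rN : relword V (val r) \in NN by case: iso => _; apply; exact: valP.
move: aC; rewrite mem_Cset => /hasPn /(_ _ rN); rewrite /= !inE.
by case/orP: H => /eqP ->; rewrite eqxx ?orbT.
Qed.

Lemma PsiL a : a \in CC -> PS' (inl a) = inl (PS a).
Proof.
move=> aC.
have [_ E'] := Psi_spec HS' (inl_C aC).
have [_ E] := Psi_spec HS aC.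
apply: (hp_inj HS'); by rewrite E' hp'_inl E tp'_inl.
Qed.

Lemma PsiT1 (r : newarr R0) : PS' (inl (val r).1) = inl (val r).2.
Proof. have [_ E] := Psi_spec HS' (tri_C1 r); apply: (hp_inj HS'); by rewrite E tri2. Qed.
Lemma PsiT2 (r : newarr R0) : PS' (inl (val r).2) = inr r.
Proof. have [_ E] := Psi_spec HS' (tri_C2 r); apply: (hp_inj HS'); by rewrite E tri3. Qed.
Lemma PsiT3 (r : newarr R0) : PS' (inr r) = inl (val r).1.
Proof. have [_ E] := Psi_spec HS' (tri_C3 r); apply: (hp_inj HS'); by rewrite E tri1. Qed.

Lemma CC'_in x : x \in CC' -> PS' x \in CC'.
Proof. by move/(Psi_spec HS') => []. Qed.
Lemma CC_in x : x \in CC -> PS x \in CC.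
Proof. by move/(Psi_spec HS) => []. Qed.

Lemma orbC_inl a : a \in CC -> size (lorb CC' PS' (inl a)) = size (lorb CC PS a).
Proof.
move=> aC.
have FRh : forall x, x \in CC -> ~~ pred0 x -> exists k, [/\ 0 < k,
    PS' (inl x) = inl (iter k PS x), ~~ pred0 (iter k PS x) &
    forall j, 0 < j < k -> pred0 (iter j PS x)].
  move=> x xC _; exists 1; split=> //; first exact: PsiL.
  by move=> j /andP [H1 H2]; rewrite ltnNge H1 in H2.
have P := FR_orb (uniq_Cset s t R sg tau) CC_in (Psi_inj HS) (uniq_Cset s' t' R' sg' tau') CC'_in
  (Psi_inj HS') (lift := fun a => inl a) (H := pred0) (fun x xC _ => inl_C xC)
  (fun x y _ _ => @inlI x y) FRh aC isT.
by rewrite (perm_size P) size_map (eq_filter (a2 := predT)) // filter_predT.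
Qed.

Lemma orbC_tri (r : newarr R0) x : x \in [:: inl (val r).1; inl (val r).2; inr r] ->
  size (lorb CC' PS' x) = 3.
Proof.
move=> xT.
have U3 : uniq [:: inl (val r).1; inl (val r).2; inr r].
  have := maxJ_uniq HS (iso_N (valP r)) => /= /andP [ne _].
  rewrite /= !inE (inj_eq inlI) andbT; rewrite mem_seq1 in ne; by rewrite (negbTE ne).
have T3 : forall y, y \in [:: inl (val r).1; inl (val r).2; inr r] ->
    PS' y \in [:: inl (val r).1; inl (val r).2; inr r].
  by move=> y; rewrite !inE => /or3P [] /eqP ->; rewrite ?PsiT1 ?PsiT2 ?PsiT3 !eqxx ?orbT.
have xC : x \in CC'.
  by move: xT; rewrite !inE => /or3P [] /eqP ->; rewrite ?tri_C1 ?tri_C2 ?tri_C3.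
have R1 : forall y, y \in [:: inl (val r).1; inl (val r).2; inr r] -> lreach PS' x y.
  have Rx : lreach PS' x (inl (val r).1).
    move: xT; rewrite !inE => /or3P [] /eqP ->; first by exists 0.
      by exists 2; rewrite /= PsiT2 PsiT3.
    by exists 1; rewrite /= PsiT3.
  move=> y; rewrite !inE => /or3P [] /eqP ->; apply: reach_trans Rx _.
  - by exists 0.
  - by exists 1; rewrite /= PsiT1.
  - by exists 2; rewrite /= PsiT1 PsiT2.
have E : perm_eq (lorb CC' PS' x) [:: inl (val r).1; inl (val r).2; inr r].
  apply: uniq_perm => //; first by apply: filter_uniq; exact: uniq_Cset.
  move=> y; apply/idP/idP.
    move/(mem_orb (uniq_Cset s' t' R' sg' tau') CC'_in (Psi_inj HS') _ xC) => [_ [n <-]].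
    by elim: n => //= n IH; apply: T3.
  move=> yT; apply/(mem_orb (uniq_Cset s' t' R' sg' tau') CC'_in (Psi_inj HS') _ xC).
  split; last exact: R1.
  by move: yT; rewrite !inE => /or3P [] /eqP ->; rewrite ?tri_C1 ?tri_C2 ?tri_C3.
by rewrite (perm_size E).
Qed.

Lemma count_filter_enum (T : finType) (c p : pred T) :
  count p [seq x <- enum T | c x] = #|[pred x | c x && p x]|.
Proof.
rewrite count_filter cardE -size_filter /enum_mem -enumT filter_predT.
by congr size; apply: eq_filter => x; rewrite /= andbC.
Qed.

Lemma card_sumP (T1 T2 : finType) (F : pred (T1 + T2)) :
  #|[pred x | F x]| = #|[pred a | F (inl a)]| + #|[pred b | F (inr b)]|.
Proof. by rewrite -!sum1_card big_sumType. Qed.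

Lemma card_orP (T : finType) (X Y : pred T) : (forall x, X x -> Y x -> False) ->
  #|[pred x | X x || Y x]| = #|[pred x | X x]| + #|[pred x | Y x]|.
Proof.
move=> D; rewrite -!sum1_card (bigID X) /=; congr (_ + _); apply: eq_bigl => x /=.
  by rewrite !inE; apply: andb_idl => ->.
rewrite !inE; case Xx: (X x); case Yx: (Y x) => //=.
by case: (D x); rewrite ?Xx ?Yx.
Qed.

Lemma countC' Q : count (fun x => size (lorb CC' PS' x) == Q) CC' =
  count (fun a => size (lorb CC PS a) == Q) CC + #|AB| * (3 == Q) + #|R0| * (3 == Q).
Proof.
rewrite /Cset !count_filter_enum -/CC -/CC' card_sumP.
congr (_ + _).
  rewrite (eq_card (B := [pred a | ((a \in CC) && (size (lorb CC PS a) == Q)) || (AB a && (3 == Q))])).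
    rewrite card_orP; last by move=> a /andP [aC _] /andP [aAB _]; move: (C_notAB aC); rewrite aAB.
    congr (_ + _); first by apply: eq_card => a; rewrite !inE mem_Cset.
    by case: (3 == Q); [rewrite muln1; apply: eq_card => a; rewrite !inE andbT|rewrite muln0; apply: eq_card0 => a; rewrite !inE andbF].
  move=> a; rewrite !inE -mem_Cset /=.
  case: (boolP (a \in CC)) => aC.
    by rewrite (inl_C aC) (orbC_inl aC) /= (negbTE (C_notAB aC)) orbF.
  case: (boolP (AB a)) => aAB /=.
    have [r /orP [] /eqP ->] := existsP aAB.
      by rewrite tri_C1 (@orbC_tri r) ?mem_head.
    by rewrite tri_C2 (@orbC_tri r) // !inE eqxx orbT.
  by apply/negP => /andP [/inl_C_inv]; rewrite (negbTE aC) (negbTE aAB).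
rewrite (eq_card (B := [pred r : newarr R0 | 3 == Q])); last first.
  by move=> r; rewrite !inE -mem_Cset tri_C3 (@orbC_tri r) // !inE eqxx !orbT.
have -> : #|R0| = #|{: {r : A * A | r \in R0}}| by rewrite card_sig; apply: eq_card => x.
by case: (3 == Q); [rewrite muln1; apply: eq_card => a|rewrite muln0; apply: eq_card0 => a].
Qed.

Lemma relword_inj : injective (relword V (A:=A)).
Proof. by move=> [a b] [a' b'] [-> ->]. Qed.

Lemma cardAB : #|AB| = 2 * #|R0|.
Proof.
pose g (x : {r : A * A | r \in R0} + {r : A * A | r \in R0}) : A :=
  match x with inl r => (val r).1 | inr r => (val r).2 end.
have rN : forall r : {r : A * A | r \in R0}, relword V (val r) \in NN.
  by move=> r; case: iso => _; apply; exact: valP.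
have ne : forall r : {r : A * A | r \in R0}, (val r).1 != (val r).2.
  by move=> r; have := maxJ_uniq HS (iso_N (valP r)) => /= /andP [ne _]; rewrite mem_seq1 in ne.
have In1 : forall r : {r : A * A | r \in R0}, (val r).1 \in arrows (relword V (val r)) by move=> r; rewrite mem_head.
have In2 : forall r : {r : A * A | r \in R0}, (val r).2 \in arrows (relword V (val r)) by move=> r; rewrite /= !inE eqxx orbT.
have ginj : injective g.
  move=> [r|r] [r'|r'] /= E.
  - by congr inl; apply: val_inj; apply: relword_inj; apply: (arrow_unique HS (rN r) (rN r') (In1 r)); rewrite E; exact: In1.
  - have E' := arrow_unique HS (rN r) (rN r') (In1 r) (ltac:(rewrite E; exact: In2)).
    by move/relword_inj: E' => E'; move: (ne r'); rewrite -E E' eqxx.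
  - have E' := arrow_unique HS (rN r) (rN r') (In2 r) (ltac:(rewrite E; exact: In1)).
    by move/relword_inj: E' => E'; move: (ne r'); rewrite -E E' eqxx.
  - by congr inr; apply: val_inj; apply: relword_inj; apply: (arrow_unique HS (rN r) (rN r') (In2 r)); rewrite E; exact: In2.
have -> : #|AB| = #|[set g x | x in [set: {r : A * A | r \in R0} + {r : A * A | r \in R0}]]|.
  apply: eq_card => a; rewrite [a \in AB]unfold_in /AB; apply/existsP/imsetP.
    by case=> r /orP [] /eqP ->; [exists (inl r)|exists (inr r)]; rewrite ?inE.
  by case=> -[r|r] _ ->; exists r; rewrite eqxx ?orbT.
rewrite card_imset // cardsT card_sum card_sig mul2n -addnn.
by congr (_ + _); apply: eq_card.
Qed.

Lemma qN_perm (O1 O2 : seq (word V (carr R0))) : perm_eq O1 O2 -> qN O1 = qN O2.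
Proof. by move=> P; apply: perm_sumn; apply: perm_map. Qed.

Lemma qN_lift (O : seq (word V A)) : qN (map lift O) = qN O.
Proof. by rewrite /qN -map_comp; congr sumn; apply: eq_map => w /=; rewrite wlen_lift. Qed.

Lemma qN_split (O : seq (word V A)) :
  qN O = qN (filter (predC Hw) O) + 2 * count Hw O.
Proof.
elim: O => //= w O IH; move: IH; rewrite /qN /wlen /= => IH.
case: (boolP (Hw w)) => H /=.
  by move: (H); case/HwP => r _ ->; rewrite /= IH; lia.
by rewrite IH; lia.
Qed.

Lemma NN'_perm : perm_eq NN' (map lift (filter (predC Hw) NN)).
Proof.
apply: uniq_perm; first exact: uniq_Nset.
  by rewrite map_inj_uniq; [apply: filter_uniq; exact: uniq_Nset|exact: lift_inj].
move=> w'; apply/idP/idP.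
  by case/unlift_N => w [wN Hn ->]; apply: map_f; rewrite mem_filter /= Hn.
by case/mapP => w; rewrite mem_filter => /andP [Hn wN] ->; apply: lift_N.
Qed.

Lemma countN (G' : gentle s' t' R') P Q :
  count (fun O => (pN O == P) && (qN O == Q)) (lorbits NN' PP') =
  count (fun O => (pN O == P + mN R0 O) && (qN O == Q + 2 * mN R0 O)) (lorbits NN PP).
Proof.
have UN := uniq_Nset s t R sg tau; have UN' := uniq_Nset s' t' R' sg' tau'.
have IN := Phi_inj HS; have IN' := Phi_inj HS'.
case: P => [|P].
  transitivity 0.
    apply/eqP; rewrite -leqn0 leqNgt -has_count; apply/hasPn => O OO.
    by rewrite /pN (negbTE (lt0n_neq0 (lorbits_size UN' PP'_in IN' OO))).
  apply/esym/eqP; rewrite -leqn0 leqNgt -has_count; apply/hasPn => O OO.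
  apply/negP => /andP [/eqP E _].
  have [x xN Ex] := lorbits_mem OO.
  apply: (no_H_orbit G' xN) => j.
  have : iter j PP x \in O.
    rewrite Ex; apply/(mem_orb UN PP_in IN _ xN); split; first exact: (iter_in PP_in).
    by exists j.
  move: E; rewrite add0n /pN /mN -/Hw => /esym /eqP; rewrite -all_count => /allP; apply.
apply/eqP; rewrite -(eqn_pmul2r (ltn0Sn P)); apply/eqP.
rewrite (orbits_count UN' PP'_in IN' (g := predT)); last first.
  by move=> O _ /andP [/eqP <- _]; rewrite count_predT.
rewrite (orbits_count UN PP_in IN (g := predC Hw)); last first.
  move=> O _ /andP [/eqP E _]; move: E; rewrite /pN /mN -/Hw.
  by rewrite -(count_predC Hw O) addnC => /eqP; rewrite eqn_add2r => /eqP.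
rewrite ((permP NN'_perm) _) count_map count_filter.
apply: eq_in_count => x xN /=.
case: (boolP (Hw x)) => Hx /=; first by rewrite andbF. rewrite andbT.
have FO := FR_orb UN PP_in IN UN' PP'_in IN' (lift := lift) (H := Hw)
  (fun x xN Hn => lift_N xN Hn) (fun x y _ _ E => lift_inj E) FR_Phi xN Hx.
rewrite /pN (perm_size FO) (qN_perm FO) size_map qN_lift.
rewrite (qN_split (lorb NN PP x)) /mN -/Hw -(count_predC Hw (lorb NN PP x)) size_filter.
by rewrite [count Hw _ + _]addnC !eqn_add2r.
Qed.

Lemma countC_final P Q :
  count (fun O => (P == 0) && (size O == Q)) (lorbits CC' PS') =
  (if (P == 0) && (Q == 3) then #|R0| else 0) +
  count (fun O => (P + 0 == 0) && (size O == Q + 2 * 0)) (lorbits CC PS).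
Proof.
have UC := uniq_Cset s t R sg tau; have UC' := uniq_Cset s' t' R' sg' tau'.
have IC := Psi_inj HS; have IC' := Psi_inj HS'.
case: P => [|P]; last first.
  by rewrite /= !(@eq_count _ _ pred0) ?count_pred0 // => O; rewrite /= addn0.
have E1 : count (fun O : seq (carr R0) => (0 == 0) && (size O == Q)) (lorbits CC' PS') =
  count (fun O => size O == Q) (lorbits CC' PS') by apply: eq_count.
have E2 : count (fun O : seq A => (0 + 0 == 0) && (size O == Q + 2 * 0)) (lorbits CC PS) =
  count (fun O => size O == Q) (lorbits CC PS) by apply: eq_count => O; rewrite /= muln0 addn0.
rewrite E1 E2 /=.
clear E1 E2; case: Q => [|Q].
  rewrite /= add0n; transitivity 0.
    apply/eqP; rewrite -leqn0 leqNgt -has_count; apply/hasPn => O OO.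
    by rewrite (negbTE (lt0n_neq0 (lorbits_size UC' CC'_in IC' OO))).
  apply/esym/eqP; rewrite -leqn0 leqNgt -has_count; apply/hasPn => O OO.
  by rewrite (negbTE (lt0n_neq0 (lorbits_size UC CC_in IC OO))).
apply/eqP; rewrite -(eqn_pmul2r (ltn0Sn Q)); apply/eqP.
rewrite (orbits_count UC' CC'_in IC' (g := predT)); last first.
  by move=> O _ /eqP <-; rewrite count_predT.
rewrite mulnDl (orbits_count UC CC_in IC (g := predT)); last first.
  by move=> O _ /eqP <-; rewrite count_predT.
rewrite (eq_count (a2 := fun x => size (lorb CC' PS' x) == Q.+1)) // countC' cardAB.
rewrite (eq_count (a1 := fun x => predT x && _) (a2 := fun x => size (lorb CC PS x) == Q.+1)) //.
case: (boolP (Q.+1 == 3)) => [/eqP E|E].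
  by rewrite E /= ; lia.
have E' : (3 == Q.+1) = false by rewrite eq_sym (negbTE E).
by rewrite E' /= !muln0 !addn0.
Qed.

End Comp.


Theorem corollary4p3 (V A : finType) (s t : A -> V) (R R0 : {set A * A})
    (sg tau : A -> bool) (sg' tau' : carr R0 -> bool) :
  gentle s t R -> sign_cond s t R sg tau ->
  isolated_set s t R sg tau R0 ->
  gentle (csrc s t R0) (ctgt s t R0) (crel R R0) ->
  sign_cond (csrc s t R0) (ctgt s t R0) (crel R R0) sg' tau' ->
  forall P Q : nat,
    fcount (csrc s t R0) (ctgt s t R0) (crel R R0) sg' tau' P Q
    = rhs s t R sg tau R0 P Q.
Proof.
move=> _ HS iso G' HS' P Q.
have EN := countN HS iso HS' G' P Q.
have EC := countC_final HS iso HS' P Q.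
rewrite /fcount /rhs.
rewrite -[orbitsN _ _ _ _ _]/(lorbits _ _) -[orbitsC _ _ _ _ _]/(lorbits _ _).
rewrite -[orbitsN s t R sg tau]/(lorbits _ _) -[orbitsC s t R sg tau]/(lorbits _ _).
by rewrite EN EC addnCA addnA.
Qed.
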